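(* Let $(\Omega,\mathcal{F})$ be a measurable space, $\mathcal{P}$ a nonempty set of probability measures on it, $\hat{\mathbb{E}}[Z]=\sup_{P\in\mathcal{P}}E_P[Z]$, and let $X,Y$ be random variables with $\hat{\mathbb{E}}[X^2]+\hat{\mathbb{E}}[Y^2]<\infty$. Then (1) $\overline{V}(X+Y)\le\overline{V}(X)+\overline{V}(Y)+2\overline{C}(X,Y)$; (2) $\underline{V}(X+Y)\ge\underline{V}(X)+\underline{V}(Y)+2\underline{C}(X,Y)$; (3) $\underline{V}\left(\frac{X+Y}{2}\right)-\overline{V}\left(\frac{X-Y}{2}\right)\le\underline{C}(X,Y)\le\overline{C}(X,Y)\le\overline{V}\left(\frac{X+Y}{2}\right)-\underline{V}\left(\frac{X-Y}{2}\right)$; (4) $|\overline{C}(X,Y)|\le\sqrt{\overline{V}(X)\overline{V}(Y)}$.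
   Context: For a random variable $W$ with $\hat{\mathbb{E}}[W^2]<\infty$: $\overline{\mu}_W=\hat{\mathbb{E}}[W]$, $\underline{\mu}_W=-\hat{\mathbb{E}}[-W]$, $M_W=[\underline{\mu}_W,\overline{\mu}_W]$. Upper variance $\overline{V}(W)=\min_{\mu\in M_W}\hat{\mathbb{E}}[(W-\mu)^2]$, lower variance $\underline{V}(W)=\min_{\mu\in M_W}\left(-\hat{\mathbb{E}}[-(W-\mu)^2]\right)$. Upper covariance $\overline{C}(X,Y)=\max_{\mu_2\in M_Y}\min_{\mu_1\in M_X}\hat{\mathbb{E}}[(X-\mu_1)(Y-\mu_2)]$; lower covariance $\underline{C}(X,Y)=\min_{\mu_2\in M_Y}\max_{\mu_1\in M_X}\left(-\hat{\mathbb{E}}[-(X-\mu_1)(Y-\mu_2)]\right)$. *)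

(* Defs.v *)
From HB Require Import structures.
From mathcomp Require Import all_boot all_order all_algebra.
From mathcomp Require Import all_classical all_reals all_analysis.
Set Implicit Arguments. Unset Strict Implicit. Unset Printing Implicit Defensive.
Import Order.TTheory GRing.Theory Num.Theory.
Local Open Scope classical_set_scope.
Local Open Scope ring_scope.

Section SublinearExpectation.
Context {d : measure_display} {T : measurableType d} {R : realType}.
Variable PP : set (probability T R).

Definition sublin_exp (Z : T -> R) : \bar R :=
  ereal_sup [set (\int[P]_x (Z x)%:E)%E | P in PP].

Definition upper_mean (W : T -> R) : R := fine (sublin_exp W).
Definition lower_mean (W : T -> R) : R := - fine (sublin_exp (fun w => - W w)).

Definition Mset (W : T -> R) : set R :=
  [set mu | lower_mean W <= mu <= upper_mean W].

Definition upper_var (W : T -> R) : R :=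
  fine (ereal_inf [set sublin_exp (fun w => (W w - mu) ^+ 2) | mu in Mset W]).

Definition lower_var (W : T -> R) : R :=
  fine (ereal_inf [set (- sublin_exp (fun w => (- (W w - mu) ^+ 2)%R))%E | mu in Mset W]).

Definition upper_cov (X Y : T -> R) : R :=
  fine (ereal_sup [set ereal_inf
          [set sublin_exp (fun w => (X w - mu1) * (Y w - mu2)) | mu1 in Mset X]
        | mu2 in Mset Y]).

Definition lower_cov (X Y : T -> R) : R :=
  fine (ereal_inf [set ereal_sup
          [set (- sublin_exp (fun w => (- ((X w - mu1) * (Y w - mu2)))%R))%E | mu1 in Mset X]
        | mu2 in Mset Y]).

End SublinearExpectation.

(* Main.v *)
Require Import Defs.
From HB Require Import structures.
From mathcomp Require Import all_boot all_order all_algebra.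
From mathcomp Require Import all_classical all_reals all_analysis.
From mathcomp Require Import measurable_realfun.
From mathcomp.algebra_tactics Require Import ring lra.
Import Order.TTheory GRing.Theory Num.Theory.
Local Open Scope classical_set_scope.
Local Open Scope ring_scope.
Section Generic.
Context {R : realType} {A : Type}.
Definition supI (D : set A) (g : A -> R) := sup [set g m | m in D].
Definition infI (D : set A) (g : A -> R) := inf [set g m | m in D].

Lemma supI_ge {D g} K {m} : (forall m, D m -> g m <= K) -> D m -> g m <= supI D g.
Proof.
move=> hK Dm; apply: ub_le_sup; last by exists m.
by exists K => _ [x Dx <-]; exact: hK.
Qed.

Lemma supI_le {D g x} : D !=set0 -> (forall m, D m -> g m <= x) -> supI D g <= x.
Proof.
move=> [m Dm] hx; apply: ge_sup; first by exists (g m), m.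
by move=> _ [y Dy <-]; exact: hx.
Qed.

Lemma infI_le {D g} K {m} : (forall m, D m -> K <= g m) -> D m -> infI D g <= g m.
Proof.
move=> hK Dm; apply: ge_inf; last by exists m.
by exists K => _ [x Dx <-]; exact: hK.
Qed.

Lemma infI_ge {D g x} : D !=set0 -> (forall m, D m -> x <= g m) -> x <= infI D g.
Proof.
move=> [m Dm] hx; apply: lb_le_inf; first by exists (g m), m.
by move=> _ [y Dy <-]; exact: hx.
Qed.
End Generic.

Lemma CS_lemma {R : realType} (a b c : R) :
  (forall s t, 0 <= s ^+ 2 * a + 2 * s * t * c + t ^+ 2 * b) -> c ^+ 2 <= a * b.
Proof.
move=> H.
have ha := H 1 0; have hb := H 0 1; have h3 := H 1 1; have h4 := H 1 (-1).
have h1 := H b (- c); have h2 := H c (- a).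
have [a0|a0] := ltrP 0 a; first by nra.
have [b0|b0] := ltrP 0 b; first by nra.
have -> : a = 0 by lra.
have -> : b = 0 by lra.
have -> : c = 0 by lra.
lra.
Qed.
Lemma pair_tt {R : realType} (ci cj ai aj qi qj s : R) : 0 < qi -> qj < 0 ->
  (forall l, 0 <= l <= 1 -> l * ci + (1 - l) * cj + l * (1 - l) * (ai - aj) * (qi - qj) <= s) ->
  ai - (s - ci) / qi <= aj - (s - cj) / qj.
Proof.
move=> qi0 qj0 H.
have D0 : 0 < qi - qj by lra.
have Dn : qi - qj != 0 by rewrite gt_eqF.
have qin : qi != 0 by rewrite gt_eqF.
have qjn : qj != 0 by rewrite lt_eqF.
set l := - qj / (qi - qj).
have l01 : 0 <= l <= 1.
  apply/andP; split; first by rewrite /l divr_ge0 //; lra.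
  by rewrite /l ler_pdivrMr // mul1r; lra.
have h := H l l01.
have e1 : (l * ci + (1 - l) * cj + l * (1 - l) * (ai - aj) * (qi - qj)) * (qi - qj)
   = - qj * ci + qi * cj - qj * qi * (ai - aj).
  by rewrite /l; field.
have h2 : - qj * ci + qi * cj - qj * qi * (ai - aj) <= s * (qi - qj).
  by rewrite -e1; apply: ler_wpM2r => //; exact: ltW.
have P : 0 < qi * - qj by apply: mulr_gt0; lra.
rewrite -(ler_pM2r P).
have -> : (ai - (s - ci) / qi) * (qi * - qj) = - qj * (ai * qi - s + ci) by field.
have -> : (aj - (s - cj) / qj) * (qi * - qj) = qi * (- qj * aj + s - cj) by field.
lra.
Qed.

Lemma pair_r {R : realType} (Vi Vj ai aj s : R) : Vi <= s -> Vj <= s ->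
  (forall l, 0 <= l <= 1 -> l * Vi + (1 - l) * Vj + l * (1 - l) * (ai - aj) ^+ 2 <= s) ->
  ai - Num.sqrt (s - Vi) <= aj + Num.sqrt (s - Vj).
Proof.
move=> hi hj H.
set ri := Num.sqrt (s - Vi); set rj := Num.sqrt (s - Vj).
have ri0 : 0 <= ri := sqrtr_ge0 _.
have rj0 : 0 <= rj := sqrtr_ge0 _.
have ri2 : ri ^+ 2 = s - Vi by rewrite sqr_sqrtr // subr_ge0.
have rj2 : rj ^+ 2 = s - Vj by rewrite sqr_sqrtr // subr_ge0.
case: (leP (ai - ri) (aj + rj)) => // hD; exfalso.
set D := ai - aj.
have hD' : ri + rj < D by rewrite /D; lra.
have D0 : 0 < D by lra.
have Dn : D != 0 by rewrite gt_eqF.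
set l := (D + rj - ri) / (2 * D).
have l01 : 0 <= l <= 1.
  apply/andP; split; first by rewrite /l divr_ge0 //; lra.
  by rewrite /l ler_pdivrMr ?mul1r; lra.
have h := H l l01; rewrite -/D in h.
have e : (l * (1 - l) * D ^+ 2 - l * ri ^+ 2 - (1 - l) * rj ^+ 2) * (4 * D)
   = (D - (ri + rj)) * ((D - (ri + rj)) * (D + 2 * (ri + rj)) + 8 * ri * rj).
  by rewrite /l; field.
have pos : 0 < (D - (ri + rj)) * ((D - (ri + rj)) * (D + 2 * (ri + rj)) + 8 * ri * rj).
  apply: mulr_gt0; first lra.
  have A1 : 0 < (D - (ri + rj)) * (D + 2 * (ri + rj)) by apply: mulr_gt0; lra.
  have A2 : 0 <= 8 * ri * rj by rewrite -mulrA; apply: mulr_ge0; [lra | exact: mulr_ge0].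
  lra.
have neg : l * (1 - l) * D ^+ 2 - l * ri ^+ 2 - (1 - l) * rj ^+ 2 <= 0.
  rewrite ri2 rj2; lra.
have : (l * (1 - l) * D ^+ 2 - l * ri ^+ 2 - (1 - l) * rj ^+ 2) * (4 * D) <= 0.
  by apply: mulr_le0_ge0 => //; lra.
rewrite e; lra.
Qed.
Section Abstract.
#[local] Set Default Proof Using "All".
Context {R : realType} {A : Type} (I : set A) (mx my mxx myy mxy : A -> R) (KX KY : R).
Hypothesis I0 : I !=set0.
Hypothesis Hpos : forall i, I i -> forall s t u : R,
  0 <= s ^+ 2 * mxx i + t ^+ 2 * myy i + 2 * s * t * mxy i
       + 2 * s * u * mx i + 2 * t * u * my i + u ^+ 2.
Hypothesis Hxx : forall i, I i -> mxx i <= KX.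
Hypothesis Hyy : forall i, I i -> myy i <= KY.

Definition Ec (c0 c1 c2 c3 c4 c5 : R) (i : A) : R :=
  c0 + c1 * mx i + c2 * my i + c3 * mxx i + c4 * myy i + c5 * mxy i.

Let B : R := 1 + KX + KY.

Lemma mom_bd {i} : I i ->
  [/\ -B <= mx i <= B, -B <= my i <= B, -B <= mxx i <= B, -B <= myy i <= B
    & -B <= mxy i <= B].
Proof.
move=> Ii; case: I0 => i0 Ii0.
have := Hpos _ Ii0 1 0 0; have := Hpos _ Ii0 0 1 0.
have := Hpos _ Ii 1 0 0; have := Hpos _ Ii 0 1 0.
have := Hpos _ Ii 1 0 1; have := Hpos _ Ii 1 0 (-1).
have := Hpos _ Ii 0 1 1; have := Hpos _ Ii 0 1 (-1).
have := Hpos _ Ii 1 1 0; have := Hpos _ Ii 1 (-1) 0.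
have := Hxx _ Ii; have := Hyy _ Ii; have := Hxx _ Ii0; have := Hyy _ Ii0.
rewrite /B => *; split; apply/andP; split; lra.
Qed.

Lemma mulB x {y} : -B <= y <= B -> x * y <= `|x| * B.
Proof.
move=> /andP[h1 h2]; apply: le_trans (ler_norm _) _.
rewrite normrM; apply: ler_wpM2l => //; rewrite ler_norml; lra.
Qed.

Lemma mulBN x {y} : -B <= y <= B -> - (`|x| * B) <= x * y.
Proof.
move=> h; have := mulB (- x) h; rewrite normrN; lra.
Qed.

Definition Nc (c0 c1 c2 c3 c4 c5 : R) :=
  `|c0| + `|c1| * B + `|c2| * B + `|c3| * B + `|c4| * B + `|c5| * B.

Lemma Ec_bd c0 c1 c2 c3 c4 c5 {i} : I i ->
  - Nc c0 c1 c2 c3 c4 c5 <= Ec c0 c1 c2 c3 c4 c5 i <= Nc c0 c1 c2 c3 c4 c5.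
Proof.
move=> Ii; have [h1 h2 h3 h4 h5] := mom_bd Ii.
have := mulB c1 h1; have := mulB c2 h2; have := mulB c3 h3; have := mulB c4 h4;
have := mulB c5 h5.
have := mulBN c1 h1; have := mulBN c2 h2; have := mulBN c3 h3; have := mulBN c4 h4;
have := mulBN c5 h5.
have := ler_norm c0; have := ler_norm (- c0); rewrite normrN.
rewrite /Ec /Nc => *; apply/andP; split; lra.
Qed.

Definition Sp (f : A -> R) := supI I f.

Lemma Sp_le f x : (forall i, I i -> f i <= x) -> Sp f <= x.
Proof. exact: supI_le. Qed.

Lemma Sp_ge_Ec c0 c1 c2 c3 c4 c5 {i} : I i ->
  Ec c0 c1 c2 c3 c4 c5 i <= Sp (Ec c0 c1 c2 c3 c4 c5).
Proof.
move=> Ii; apply: (supI_ge (Nc c0 c1 c2 c3 c4 c5)) => // j Ij.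
by case/andP: (Ec_bd c0 c1 c2 c3 c4 c5 Ij).
Qed.

Lemma Sp_ge_NEc c0 c1 c2 c3 c4 c5 {i} : I i ->
  - Ec c0 c1 c2 c3 c4 c5 i <= Sp (fun j => - Ec c0 c1 c2 c3 c4 c5 j).
Proof.
move=> Ii; apply: (@supI_ge _ _ I (fun j => - Ec c0 c1 c2 c3 c4 c5 j) (Nc c0 c1 c2 c3 c4 c5) i) => // j Ij.
case/andP: (Ec_bd c0 c1 c2 c3 c4 c5 Ij) => *; lra.
Qed.

Lemma Sp_bd c0 c1 c2 c3 c4 c5 :
  - Nc c0 c1 c2 c3 c4 c5 <= Sp (Ec c0 c1 c2 c3 c4 c5) <= Nc c0 c1 c2 c3 c4 c5.
Proof.
case: I0 => i0 Ii0; apply/andP; split.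
  apply: le_trans (Sp_ge_Ec _ _ _ _ _ _ Ii0).
  by case/andP: (Ec_bd c0 c1 c2 c3 c4 c5 Ii0).
by apply: Sp_le => i Ii; case/andP: (Ec_bd c0 c1 c2 c3 c4 c5 Ii).
Qed.

Lemma Sp_bdN c0 c1 c2 c3 c4 c5 :
  - Nc c0 c1 c2 c3 c4 c5 <= Sp (fun j => - Ec c0 c1 c2 c3 c4 c5 j) <= Nc c0 c1 c2 c3 c4 c5.
Proof.
case: I0 => i0 Ii0; apply/andP; split.
  apply: le_trans (Sp_ge_NEc _ _ _ _ _ _ Ii0).
  case/andP: (Ec_bd c0 c1 c2 c3 c4 c5 Ii0) => *; lra.
apply: Sp_le => i Ii; case/andP: (Ec_bd c0 c1 c2 c3 c4 c5 Ii) => *; lra.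
Qed.

Definition mean s t := Ec 0 s t 0 0 0.
Definition qf s t mu := Ec (mu ^+ 2) (- (2 * mu * s)) (- (2 * mu * t)) (s ^+ 2) (t ^+ 2) (2 * s * t).
Definition hf m1 m2 := Ec (m1 * m2) (- m2) (- m1) 0 0 1.
Definition up s t := Sp (mean s t).
Definition lo s t := - Sp (fun i => - mean s t i).
Definition Mi s t := [set mu | lo s t <= mu <= up s t].
Definition UV s t := infI (Mi s t) (fun mu => Sp (qf s t mu)).
Definition LV s t := infI (Mi s t) (fun mu => - Sp (fun i => - qf s t mu i)).
Definition UC := supI (Mi 0 1) (fun m2 => infI (Mi 1 0) (fun m1 => Sp (hf m1 m2))).
Definition LC := infI (Mi 0 1) (fun m2 => supI (Mi 1 0) (fun m1 => - Sp (fun i => - hf m1 m2 i))).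

Definition V s t i := qf s t (mean s t i) i.
Definition C i := hf (mx i) (my i) i.
Definition VarQ s t i j l := l * V s t i + (1 - l) * V s t j + l * (1 - l) * (mean s t i - mean s t j) ^+ 2.
Definition CovQ i j l := l * C i + (1 - l) * C j + l * (1 - l) * (mx i - mx j) * (my i - my j).

Lemma qfV s t mu i : qf s t mu i = V s t i + (mean s t i - mu) ^+ 2.
Proof. rewrite /V /qf /mean /Ec; ring. Qed.

Lemma V_ge0 s t {i} : I i -> 0 <= V s t i.
Proof.
move=> Ii; have := Hpos _ Ii s t (- mean s t i).
rewrite /V /qf /mean /Ec => h; nra.
Qed.

Lemma qf_ge0 s t mu {i} : I i -> 0 <= qf s t mu i.
Proof. move=> Ii; rewrite qfV; apply: addr_ge0; [exact: V_ge0 | exact: sqr_ge0]. Qed.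

Lemma mean_M s t {i} : I i -> Mi s t (mean s t i).
Proof.
move=> Ii; rewrite /Mi /lo /up /=; apply/andP; split.
  have := Sp_ge_NEc 0 s t 0 0 0 Ii; rewrite /mean; lra.
exact: Sp_ge_Ec.
Qed.

Lemma M_ne s t : Mi s t !=set0.
Proof. case: I0 => i0 Ii0; exists (mean s t i0); exact: mean_M. Qed.

Lemma M_conv s t m1 m2 l : Mi s t m1 -> Mi s t m2 -> 0 <= l <= 1 ->
  Mi s t (l * m1 + (1 - l) * m2).
Proof.
rewrite /Mi /= => /andP[h1 h2] /andP[h3 h4] /andP[h5 h6].
apply/andP; split; nra.
Qed.

Lemma mean10 i : mean 1 0 i = mx i.
Proof. rewrite /mean /Ec; ring. Qed.
Lemma mean01 i : mean 0 1 i = my i.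
Proof. rewrite /mean /Ec; ring. Qed.

Lemma M10_bd {m} : Mi 1 0 m -> -B <= m <= B.
Proof.
rewrite /Mi /lo /up /= => /andP[h1 h2].
have u1 : Sp (mean 1 0) <= B.
  by apply: Sp_le => i Ii; rewrite mean10; case: (mom_bd Ii) => /andP[].
have u2 : Sp (fun i => - mean 1 0 i) <= B.
  apply: Sp_le => i Ii; rewrite mean10; case: (mom_bd Ii) => /andP[] *; lra.
apply/andP; split; lra.
Qed.

Lemma M01_bd {m} : Mi 0 1 m -> -B <= m <= B.
Proof.
rewrite /Mi /lo /up /= => /andP[h1 h2].
have u1 : Sp (mean 0 1) <= B.
  by apply: Sp_le => i Ii; rewrite mean01; case: (mom_bd Ii) => _ /andP[].
have u2 : Sp (fun i => - mean 0 1 i) <= B.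
  apply: Sp_le => i Ii; rewrite mean01; case: (mom_bd Ii) => _ /andP[] *; lra.
apply/andP; split; lra.
Qed.

Lemma prodB {x y} : -B <= x <= B -> -B <= y <= B -> - (B * B) <= x * y <= B * B.
Proof. move=> /andP[? ?] /andP[? ?]; apply/andP; split; nra. Qed.

Let Bh := B + 3 * (B * B).

Lemma hf_bd {m1 m2 i} : -B <= m1 <= B -> -B <= m2 <= B -> I i ->
  - Bh <= hf m1 m2 i <= Bh.
Proof.
move=> h1 h2 Ii; case: (mom_bd Ii) => hx hy _ _ hxy.
have := prodB h1 h2; have := prodB h2 hx; have := prodB h1 hy.
rewrite /hf /Ec /Bh => /andP[? ?] /andP[? ?] /andP[? ?].
move: hxy => /andP[? ?]; apply/andP; split; lra.
Qed.

Lemma Sphf_bd {m1 m2} : -B <= m1 <= B -> -B <= m2 <= B ->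
  - Bh <= Sp (hf m1 m2) <= Bh /\ - Bh <= - Sp (fun i => - hf m1 m2 i) <= Bh.
Proof.
move=> h1 h2; case: I0 => i0 Ii0.
have hb := fun i (Ii : I i) => hf_bd h1 h2 Ii.
have a1 : hf m1 m2 i0 <= Sp (hf m1 m2) by exact: Sp_ge_Ec.
have a2 : - hf m1 m2 i0 <= Sp (fun i => - hf m1 m2 i) by exact: Sp_ge_NEc.
have a3 : Sp (hf m1 m2) <= Bh by apply: Sp_le => i Ii; case/andP: (hb i Ii).
have a4 : Sp (fun i => - hf m1 m2 i) <= Bh.
  by apply: Sp_le => i Ii; case/andP: (hb i Ii) => *; lra.
case/andP: (hb i0 Ii0) => *; split; apply/andP; split; lra.
Qed.
Lemma F1 s t {i j l} : I i -> I j -> 0 <= l <= 1 -> VarQ s t i j l <= UV s t.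
Proof.
move=> Ii Ij /andP[l0 l1]; apply: infI_ge; first exact: M_ne.
move=> mu _.
have hi : qf s t mu i <= Sp (qf s t mu) by exact: Sp_ge_Ec.
have hj : qf s t mu j <= Sp (qf s t mu) by exact: Sp_ge_Ec.
rewrite !qfV in hi hj.
have p1 : 0 <= l * (Sp (qf s t mu) - (V s t i + (mean s t i - mu) ^+ 2)).
  by apply: mulr_ge0 => //; rewrite subr_ge0.
have p2 : 0 <= (1 - l) * (Sp (qf s t mu) - (V s t j + (mean s t j - mu) ^+ 2)).
  by apply: mulr_ge0; rewrite subr_ge0.
have sq := sqr_ge0 (mu - l * mean s t i - (1 - l) * mean s t j).
rewrite /VarQ; nra.
Qed.

Lemma LV_ub0 s t mu : 0 <= - Sp (fun i => - qf s t mu i).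
Proof.
suff : Sp (fun i => - qf s t mu i) <= 0 by lra.
by apply: Sp_le => i Ii; have := qf_ge0 s t mu Ii; lra.
Qed.

Lemma F2 s t {i} : I i -> LV s t <= V s t i.
Proof.
move=> Ii; apply: le_trans (infI_le 0 _ (mean_M s t Ii)) _.
  by move=> mu _; exact: LV_ub0.
have := Sp_ge_NEc (mean s t i ^+ 2) (- (2 * mean s t i * s)) (- (2 * mean s t i * t))
  (s ^+ 2) (t ^+ 2) (2 * s * t) Ii.
rewrite /V /qf; lra.
Qed.

Lemma hf_C (m1 m2 : R) (i : A) : hf m1 m2 i = C i + (mx i - m1) * (my i - m2).
Proof. rewrite /C /hf /Ec; ring. Qed.

Lemma F3 {i j l} : I i -> I j -> 0 <= l <= 1 -> CovQ i j l <= UC.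
Proof.
move=> Ii Ij /andP[l0 l1].
case: I0 => i0 Ii0.
set m2 := l * my i + (1 - l) * my j.
have Mm2 : Mi 0 1 m2.
  rewrite /m2 -!mean01; apply: M_conv; [exact: mean_M|exact: mean_M|lra].
have Mm1 := mean_M 1 0 Ii0.
apply: le_trans _ (supI_ge Bh _ Mm2).
  apply: infI_ge; first exact: M_ne.
  move=> m1 _.
  have hi : hf m1 m2 i <= Sp (hf m1 m2) by exact: Sp_ge_Ec.
  have hj : hf m1 m2 j <= Sp (hf m1 m2) by exact: Sp_ge_Ec.
  have e : l * hf m1 m2 i + (1 - l) * hf m1 m2 j = CovQ i j l.
    by rewrite !hf_C /CovQ /m2; ring.
  have p1 : 0 <= l * (Sp (hf m1 m2) - hf m1 m2 i).
    by apply: mulr_ge0 => //; rewrite subr_ge0.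
  have p2 : 0 <= (1 - l) * (Sp (hf m1 m2) - hf m1 m2 j).
    by apply: mulr_ge0; rewrite subr_ge0.
  nra.
move=> m Mm.
apply: le_trans (infI_le (- Bh) _ Mm1) _.
  move=> m1 Mm1'; by case: (Sphf_bd (M10_bd Mm1') (M01_bd Mm)) => /andP[].
by case: (Sphf_bd (M10_bd Mm1) (M01_bd Mm)) => /andP[].
Qed.

Lemma F4 {i} : I i -> LC <= C i.
Proof.
move=> Ii; case: I0 => i0 Ii0.
have Mm2 : Mi 0 1 (my i) by rewrite -mean01; exact: mean_M.
have Mm1 := mean_M 1 0 Ii0.
apply: le_trans (infI_le (- Bh) _ Mm2) _.
  move=> m Mm; apply: le_trans _ (supI_ge Bh _ Mm1).
    by case: (Sphf_bd (M10_bd Mm1) (M01_bd Mm)) => _ /andP[].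
  by move=> m1 Mm1'; case: (Sphf_bd (M10_bd Mm1') (M01_bd Mm)) => _ /andP[].
apply: supI_le; first exact: M_ne.
move=> m1 _.
have := Sp_ge_NEc (m1 * my i) (- my i) (- m1) 0 0 1 Ii.
have := hf_C m1 (my i) i; rewrite /hf => e.
rewrite e subrr mulr0 addr0; lra.
Qed.
Lemma Sp_ge (f : A -> R) {K i} : (forall j, I j -> f j <= K) -> I i -> f i <= Sp f.
Proof. move=> hK Ii; exact: (supI_ge K hK Ii). Qed.

Lemma lineB (a b c : A -> R) (m2 s K : R) :
  (forall i, I i -> a i <= K) -> (forall i, I i -> - a i <= K) ->
  (forall i j l, I i -> I j -> 0 <= l <= 1 ->
     l * c i + (1 - l) * c j + l * (1 - l) * (a i - a j) * (b i - b j) <= s) ->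
  exists2 t, - Sp (fun i => - a i) <= t <= Sp a &
    forall i, I i -> c i + (a i - t) * (b i - m2) <= s.
Proof.
move=> Ka KNa H.
case: I0 => i0 Ii0.
have ci : forall i, I i -> c i <= s.
  move=> i Ii; have := H i i 1 Ii Ii; rewrite ler01 lexx /= => /(_ isT); lra.
set lo := - Sp (fun i => - a i); set up := Sp a.
have aM : forall i, I i -> lo <= a i <= up.
  move=> i Ii; apply/andP; split.
    have := Sp_ge (fun i => - a i) KNa Ii; rewrite /lo; lra.
  exact: Sp_ge Ka Ii.
have lup : lo <= up by case/andP: (aM i0 Ii0) => *; lra.
pose tt i := a i - (s - c i) / (b i - m2).
pose E := [set x | x = lo \/ exists2 i, I i /\ 0 < b i - m2 & x = tt i].
have E0 : E lo by left.
have Eub : forall x, E x -> x <= up.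
  move=> x [->|[i [Ii qi] ->]] //.
  have : 0 <= (s - c i) / (b i - m2) by apply: divr_ge0; [rewrite subr_ge0; exact: ci|exact: ltW].
  case/andP: (aM i Ii) => *; rewrite /tt; lra.
have pr : forall i j, I i -> I j -> 0 < b i - m2 -> b j - m2 < 0 -> tt i <= tt j.
  move=> i j Ii Ij qi qj; rewrite /tt; apply: pair_tt => // l l01.
  have := H i j l Ii Ij l01.
  by have -> : b i - b j = (b i - m2) - (b j - m2) by ring.
have hub : has_ubound E by exists up.
have hL1 : lo <= sup E by exact: (ub_le_sup hub E0).
have hL2 : sup E <= up by apply: ge_sup; [exists lo | exact: Eub].
have hLi : forall i, I i -> 0 < b i - m2 -> tt i <= sup E.
  move=> i Ii qi; apply: (ub_le_sup hub); right; by exists i.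
have hLj : forall j, I j -> b j - m2 < 0 -> sup E <= tt j.
  move=> j Ij qj; apply: ge_sup; first by exists lo.
  move=> x [->|[i [Ii qi] ->]]; last exact: pr.
  have qjn : b j - m2 != 0 by rewrite lt_eqF.
  have e : (s - c j) / (b j - m2) * (b j - m2) = s - c j by rewrite divfK.
  have := ci j Ij; case/andP: (aM j Ij) => *; rewrite /tt; nra.
exists (sup E); first by apply/andP; split.
move=> i Ii.
have [qn|qp|q0] := ltgtP (b i - m2) 0.
- have qin : b i - m2 != 0 by rewrite lt_eqF.
  have e : (s - c i) / (b i - m2) * (b i - m2) = s - c i by rewrite divfK.
  have := hLj i Ii qn; rewrite /tt => h; nra.
- have qin : b i - m2 != 0 by rewrite gt_eqF.
  have e : (s - c i) / (b i - m2) * (b i - m2) = s - c i by rewrite divfK.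
  have := hLi i Ii qp; rewrite /tt => h; nra.
- by rewrite q0 mulr0 addr0; exact: ci.
Qed.

Lemma hellyA (a v : A -> R) (s K : R) :
  (forall i, I i -> a i <= K) -> (forall i, I i -> - a i <= K) ->
  (forall i j l, I i -> I j -> 0 <= l <= 1 ->
     l * v i + (1 - l) * v j + l * (1 - l) * (a i - a j) ^+ 2 <= s) ->
  exists2 mu, - Sp (fun i => - a i) <= mu <= Sp a &
    forall i, I i -> v i + (a i - mu) ^+ 2 <= s.
Proof.
move=> Ka KNa H.
case: I0 => i0 Ii0.
have vi : forall i, I i -> v i <= s.
  move=> i Ii; have := H i i 1 Ii Ii; rewrite ler01 lexx /= => /(_ isT); lra.
set lo := - Sp (fun i => - a i); set up := Sp a.
have aM : forall i, I i -> lo <= a i <= up.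
  move=> i Ii; apply/andP; split.
    have := Sp_ge (fun i => - a i) KNa Ii; rewrite /lo; lra.
  exact: Sp_ge Ka Ii.
pose r i := Num.sqrt (s - v i).
have r0 : forall i, 0 <= r i by move=> i; exact: sqrtr_ge0.
have r2 : forall i, I i -> r i ^+ 2 = s - v i.
  by move=> i Ii; rewrite sqr_sqrtr // subr_ge0; exact: vi.
have pr : forall i j, I i -> I j -> a i - r i <= a j + r j.
  move=> i j Ii Ij; apply: pair_r; [exact: vi|exact: vi|].
  by move=> l l01; exact: H.
pose L := Sp (fun i => a i - r i).
have hLi : forall i, I i -> a i - r i <= L.
  move=> i Ii; apply: (Sp_ge (fun i => a i - r i) (K := K)) => // j Ij.
  have := Ka j Ij; have := r0 j; lra.
have hLj : forall j, I j -> L <= a j + r j.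
  by move=> j Ij; apply: Sp_le => i Ii; exact: pr.
exists (Num.max L lo).
  apply/andP; split; first by rewrite le_max lexx orbT.
  rewrite ge_max; apply/andP; split.
    by apply: Sp_le => i Ii; have := r0 i; case/andP: (aM i Ii) => *; lra.
  by case/andP: (aM i0 Ii0) => *; lra.
move=> i Ii.
have h1 : a i - r i <= Num.max L lo by rewrite le_max hLi.
have h2 : Num.max L lo <= a i + r i.
  rewrite ge_max hLj //=; have := r0 i; case/andP: (aM i Ii) => *; lra.
have := r2 i Ii; nra.
Qed.
Lemma UC_le s : (forall i j l, I i -> I j -> 0 <= l <= 1 -> CovQ i j l <= s) -> UC <= s.
Proof.
move=> H; apply: supI_le; first exact: M_ne.
move=> m2 Mm2.
have Ka : forall i, I i -> mean 1 0 i <= B.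
  by move=> i Ii; rewrite mean10; case: (mom_bd Ii) => /andP[].
have KNa : forall i, I i -> - mean 1 0 i <= B.
  by move=> i Ii; rewrite mean10; case: (mom_bd Ii) => /andP[] *; lra.
have [t Mt Ht] := lineB (mean 1 0) my C m2 s B Ka KNa
  (fun i j l Ii Ij hl => ltac:(rewrite !mean10; exact: H)).
have Mt' : Mi 1 0 t by exact: Mt.
apply: le_trans (infI_le (- Bh) _ Mt') _.
  by move=> m1 Mm1; case: (Sphf_bd (M10_bd Mm1) (M01_bd Mm2)) => /andP[].
apply: Sp_le => i Ii; rewrite hf_C; have := Ht i Ii; rewrite mean10; lra.
Qed.

Lemma LC_ge s : (forall i j l, I i -> I j -> 0 <= l <= 1 -> s <= CovQ i j l) -> s <= LC.
Proof.
move=> H; apply: infI_ge; first exact: M_ne.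
move=> m2 Mm2.
have Ka : forall i, I i -> mean 1 0 i <= B.
  by move=> i Ii; rewrite mean10; case: (mom_bd Ii) => /andP[].
have KNa : forall i, I i -> - mean 1 0 i <= B.
  by move=> i Ii; rewrite mean10; case: (mom_bd Ii) => /andP[] *; lra.
have H' : forall i j l, I i -> I j -> 0 <= l <= 1 ->
   l * (- C i) + (1 - l) * (- C j) + l * (1 - l) * (mean 1 0 i - mean 1 0 j)
      * (- my i - - my j) <= - s.
  move=> i j l Ii Ij hl; have := H i j l Ii Ij hl; rewrite !mean10 /CovQ; lra.
have [t Mt Ht] := lineB (mean 1 0) (fun i => - my i) (fun i => - C i) (- m2) (- s) B Ka KNa H'.
have Mt' : Mi 1 0 t by exact: Mt.
apply: le_trans _ (supI_ge Bh _ Mt').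
  suff : Sp (fun i => - hf t m2 i) <= - s by lra.
  apply: Sp_le => i Ii; rewrite hf_C; have := Ht i Ii; rewrite mean10 /=; lra.
by move=> m1 Mm1; case: (Sphf_bd (M10_bd Mm1) (M01_bd Mm2)) => _ /andP[].
Qed.

Lemma e1 i j l : VarQ 1 1 i j l = VarQ 1 0 i j l + VarQ 0 1 i j l + 2 * CovQ i j l.
Proof. rewrite /VarQ /V /qf /mean /CovQ /C /hf /Ec; ring. Qed.

Lemma e2 i : V 1 1 i = V 1 0 i + V 0 1 i + 2 * C i.
Proof. rewrite /V /qf /mean /C /hf /Ec; ring. Qed.

Lemma e3 i j l : CovQ i j l = VarQ (2^-1) (2^-1) i j l - VarQ (2^-1) (- 2^-1) i j l.
Proof. by rewrite /VarQ /V /qf /mean /CovQ /C /hf /Ec; field. Qed.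

Lemma e4 s t i j l : VarQ s t i j l
   = s ^+ 2 * VarQ 1 0 i j l + 2 * s * t * CovQ i j l + t ^+ 2 * VarQ 0 1 i j l.
Proof. rewrite /VarQ /V /qf /mean /CovQ /C /hf /Ec; ring. Qed.

Lemma VarQ_ge0 s t {i j l} : I i -> I j -> 0 <= l <= 1 -> 0 <= VarQ s t i j l.
Proof.
move=> Ii Ij /andP[l0 l1]; rewrite /VarQ.
have := V_ge0 s t Ii; have := V_ge0 s t Ij.
have := sqr_ge0 (mean s t i - mean s t j).
move=> h1 h2 h3.
have p1 : 0 <= l * V s t i by exact: mulr_ge0.
have p2 : 0 <= (1 - l) * V s t j by apply: mulr_ge0; lra.
have p3 : 0 <= l * (1 - l) * (mean s t i - mean s t j) ^+ 2.
  by apply: mulr_ge0 => //; apply: mulr_ge0; lra.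
lra.
Qed.

Lemma VarQ_ge_LV s t {i j l} : I i -> I j -> 0 <= l <= 1 -> LV s t <= VarQ s t i j l.
Proof.
move=> Ii Ij /andP[l0 l1]; rewrite /VarQ.
have := F2 s t Ii; have := F2 s t Ij.
have := sqr_ge0 (mean s t i - mean s t j).
move=> h1 h2 h3.
have p1 : l * LV s t <= l * V s t i by exact: ler_wpM2l.
have p2 : (1 - l) * LV s t <= (1 - l) * V s t j by apply: ler_wpM2l => //; lra.
have p3 : 0 <= l * (1 - l) * (mean s t i - mean s t j) ^+ 2.
  by apply: mulr_ge0 => //; apply: mulr_ge0; lra.
lra.
Qed.

Lemma UV_elem_ge0 s t mu : 0 <= Sp (qf s t mu).
Proof.
case: I0 => i0 Ii0; apply: le_trans (qf_ge0 s t mu Ii0) _; exact: Sp_ge_Ec.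
Qed.

Lemma abstract_main :
  [/\ UV 1 1 <= UV 1 0 + UV 0 1 + 2 * UC,
      LV 1 0 + LV 0 1 + 2 * LC <= LV 1 1,
      [/\ LV (2^-1) (2^-1) - UV (2^-1) (- 2^-1) <= LC, LC <= UC
        & UC <= UV (2^-1) (2^-1) - LV (2^-1) (- 2^-1)]
    & `|UC| <= Num.sqrt (UV 1 0 * UV 0 1)].
Proof.
case: I0 => i0 Ii0.
have Cii : CovQ i0 i0 1 = C i0 by rewrite /CovQ; ring.
have l1 : 0 <= (1:R) <= 1 by rewrite ler01 lexx.
split.
- have Ka : forall i, I i -> mean 1 1 i <= B + B.
    move=> i Ii; case: (mom_bd Ii) => /andP[? ?] /andP[? ?] *; rewrite /mean /Ec; lra.
  have KNa : forall i, I i -> - mean 1 1 i <= B + B.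
    move=> i Ii; case: (mom_bd Ii) => /andP[? ?] /andP[? ?] *; rewrite /mean /Ec; lra.
  have [mu Mmu Hmu] := hellyA (mean 1 1) (V 1 1) (UV 1 0 + UV 0 1 + 2 * UC) (B + B) Ka KNa
    (fun i j l Ii Ij hl => ltac:(change (VarQ 1 1 i j l <= UV 1 0 + UV 0 1 + 2 * UC);
       rewrite e1; have := F1 1 0 Ii Ij hl; have := F1 0 1 Ii Ij hl;
       have := F3 Ii Ij hl; lra)).
  have Mmu' : Mi 1 1 mu by exact: Mmu.
  apply: le_trans (infI_le 0 _ Mmu') _.
    by move=> m _; exact: UV_elem_ge0.
  by apply: Sp_le => i Ii; rewrite qfV; exact: Hmu.
- apply: infI_ge; first exact: M_ne.
  move=> mu _.
  suff : Sp (fun i => - qf 1 1 mu i) <= - (LV 1 0 + LV 0 1 + 2 * LC) by lra.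
  apply: Sp_le => i Ii; rewrite qfV e2.
  have := F2 1 0 Ii; have := F2 0 1 Ii; have := F4 Ii.
  have := sqr_ge0 (mean 1 1 i - mu); lra.
- split.
  + apply: LC_ge => i j l Ii Ij hl; rewrite e3.
    have := VarQ_ge_LV (2^-1) (2^-1) Ii Ij hl; have := F1 (2^-1) (- 2^-1) Ii Ij hl; lra.
  + by apply: le_trans (F4 Ii0) _; rewrite -Cii; exact: F3.
  + apply: UC_le => i j l Ii Ij hl; rewrite e3.
    have := VarQ_ge_LV (2^-1) (- 2^-1) Ii Ij hl; have := F1 (2^-1) (2^-1) Ii Ij hl; lra.
have cs : forall i j l, I i -> I j -> 0 <= l <= 1 ->
    `|CovQ i j l| <= Num.sqrt (UV 1 0 * UV 0 1).
  move=> i j l Ii Ij hl.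
  have h : CovQ i j l ^+ 2 <= VarQ 1 0 i j l * VarQ 0 1 i j l.
    by apply: CS_lemma => s t; rewrite -e4; exact: VarQ_ge0.
  rewrite -sqrtr_sqr; apply: le_trans (ler_wsqrtr h) _; apply: ler_wsqrtr.
  apply: ler_pM; [exact: VarQ_ge0|exact: VarQ_ge0|exact: F1|exact: F1].
have up : UC <= Num.sqrt (UV 1 0 * UV 0 1).
  by apply: UC_le => i j l Ii Ij hl; apply: le_trans (ler_norm _) (cs i j l Ii Ij hl).
have lo : - Num.sqrt (UV 1 0 * UV 0 1) <= UC.
  apply: le_trans (F3 Ii0 Ii0 l1).
  have := cs i0 i0 1 Ii0 Ii0 l1; have := ler_norm (- CovQ i0 i0 1); rewrite normrN; lra.
by rewrite ler_norml lo up.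
Qed.
Lemma Ec_ub_set c0 c1 c2 c3 c4 c5 : has_ubound [set Ec c0 c1 c2 c3 c4 c5 i | i in I].
Proof.
exists (Nc c0 c1 c2 c3 c4 c5) => _ [i Ii <-].
by case/andP: (Ec_bd c0 c1 c2 c3 c4 c5 Ii).
Qed.

Lemma UV_lb s t : has_lbound [set Sp (qf s t mu) | mu in Mi s t].
Proof. by exists 0 => _ [mu _ <-]; exact: UV_elem_ge0. Qed.

Lemma LV_lb s t : has_lbound [set - Sp (fun i => - qf s t mu i) | mu in Mi s t].
Proof. by exists 0 => _ [mu _ <-]; exact: LV_ub0. Qed.

Lemma UCin_lb m2 : Mi 0 1 m2 -> has_lbound [set Sp (hf m1 m2) | m1 in Mi 1 0].
Proof.
move=> Mm2; exists (- Bh) => _ [m1 Mm1 <-].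
by case: (Sphf_bd (M10_bd Mm1) (M01_bd Mm2)) => /andP[].
Qed.

Lemma UCout_ub :
  has_ubound [set infI (Mi 1 0) (fun m1 => Sp (hf m1 m2)) | m2 in Mi 0 1].
Proof.
case: I0 => i0 Ii0; have Mm1 := mean_M 1 0 Ii0.
exists Bh => _ [m2 Mm2 <-].
apply: le_trans (infI_le (- Bh) _ Mm1) _.
  by move=> m1 Mm1'; case: (Sphf_bd (M10_bd Mm1') (M01_bd Mm2)) => /andP[].
by case: (Sphf_bd (M10_bd Mm1) (M01_bd Mm2)) => /andP[].
Qed.

Lemma LCin_ub m2 : Mi 0 1 m2 ->
  has_ubound [set - Sp (fun i => - hf m1 m2 i) | m1 in Mi 1 0].
Proof.
move=> Mm2; exists Bh => _ [m1 Mm1 <-].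
by case: (Sphf_bd (M10_bd Mm1) (M01_bd Mm2)) => _ /andP[].
Qed.

Lemma LCout_lb :
  has_lbound [set supI (Mi 1 0) (fun m1 => - Sp (fun i => - hf m1 m2 i)) | m2 in Mi 0 1].
Proof.
case: I0 => i0 Ii0; have Mm1 := mean_M 1 0 Ii0.
exists (- Bh) => _ [m2 Mm2 <-].
apply: le_trans _ (supI_ge Bh _ Mm1).
  by case: (Sphf_bd (M10_bd Mm1) (M01_bd Mm2)) => _ /andP[].
by move=> m1 Mm1'; case: (Sphf_bd (M10_bd Mm1') (M01_bd Mm2)) => _ /andP[].
Qed.

End Abstract.
Definition qp {R : realType} (c0 c1 c2 c3 c4 c5 x y : R) : R :=
  c0 + c1 * x + c2 * y + c3 * x ^+ 2 + c4 * y ^+ 2 + c5 * (x * y).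

Section Concrete.
Context {d : measure_display} {T : measurableType d} {R : realType}.
Variables (X Y : T -> R).
Hypotheses (mX : measurable_fun setT X) (mY : measurable_fun setT Y).

Definition mom (f : T -> R) (P : probability T R) : R := fine (\int[P]_x (f x)%:E).

Section OneP.
Variable P : probability T R.
Hypothesis iX2 : P.-integrable setT (EFin \o (fun x => X x ^+ 2)).
Hypothesis iY2 : P.-integrable setT (EFin \o (fun x => Y x ^+ 2)).

Lemma i_cst k : P.-integrable setT (EFin \o (fun _ : T => k)).
Proof. exact: finite_measure_integrable_cst. Qed.

Lemma intDZ {f g : T -> R} k :
  P.-integrable setT (EFin \o f) -> P.-integrable setT (EFin \o g) ->
  P.-integrable setT (EFin \o (fun x => f x + k * g x)) /\
  (\int[P]_x (f x + k * g x)%:E = \int[P]_x (f x)%:E + k%:E * \int[P]_x (g x)%:E)%E.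
Proof.
move=> hf hg.
have hkg : P.-integrable setT (EFin \o (fun x => k * g x)).
  apply: (eq_integrable measurableT (fun x => (k%:E * (EFin \o g) x)%E)) => //.
  exact: integrableZl.
split.
  apply: (eq_integrable measurableT ((EFin \o f) \+ (EFin \o (fun x => (k * g x)%R)))%E) => //.
  exact: integrableD.
transitivity (\int[P]_x ((EFin \o f) x + (EFin \o (fun x => (k * g x)%R)) x))%E.
  by apply: eq_integral => x _.
rewrite integralD//; congr (_ + _)%E.
transitivity (\int[P]_x (k%:E * (EFin \o g) x)%E)%E.
  by apply: eq_integral => x _.
by rewrite integralZl.
Qed.

Lemma iX : P.-integrable setT (EFin \o X).
Proof.
have h1 : P.-integrable setT (EFin \o (fun x => 1 + 1 * X x ^+ 2)).
  by case: (intDZ 1 (i_cst 1) iX2).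
apply: (le_integrable measurableT _ _ h1) => //; first exact/measurable_EFinP.
move=> x _ /=; rewrite lee_fin mul1r.
rewrite [leRHS]ger0_norm; last by apply: addr_ge0 => //; exact: sqr_ge0.
have := normr_ge0 (X x); have := sqr_ge0 (`|X x| - 1); have := real_normK (num_real (X x)); nra.
Qed.

Lemma iY : P.-integrable setT (EFin \o Y).
Proof.
have h1 : P.-integrable setT (EFin \o (fun x => 1 + 1 * Y x ^+ 2)).
  by case: (intDZ 1 (i_cst 1) iY2).
apply: (le_integrable measurableT _ _ h1) => //; first exact/measurable_EFinP.
move=> x _ /=; rewrite lee_fin mul1r.
rewrite [leRHS]ger0_norm; last by apply: addr_ge0 => //; exact: sqr_ge0.
have := normr_ge0 (Y x); have := sqr_ge0 (`|Y x| - 1); have := real_normK (num_real (Y x)); nra.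
Qed.

Lemma iXY : P.-integrable setT (EFin \o (fun x => X x * Y x)).
Proof.
have h1 : P.-integrable setT (EFin \o (fun x => X x ^+ 2 + 1 * Y x ^+ 2)).
  by case: (intDZ 1 iX2 iY2).
apply: (le_integrable measurableT _ _ h1) => //.
  by apply/measurable_EFinP; exact: measurable_funM.
move=> x _ /=; rewrite lee_fin mul1r.
rewrite [leRHS]ger0_norm; last by apply: addr_ge0; exact: sqr_ge0.
rewrite normrM.
have := normr_ge0 (Y x); have := normr_ge0 (X x).
have := sqr_ge0 (`|X x| - `|Y x|); have := real_normK (num_real (Y x));
have := real_normK (num_real (X x)); nra.
Qed.

Lemma int_mom {f : T -> R} : P.-integrable setT (EFin \o f) ->
  (\int[P]_x (f x)%:E = (mom f P)%:E)%E.
Proof. by move=> h; rewrite /mom fineK //; exact: integrable_fin_num. Qed.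

Lemma int_qp c0 c1 c2 c3 c4 c5 :
  (\int[P]_x (qp c0 c1 c2 c3 c4 c5 (X x) (Y x))%:E =
  (Ec (mom X) (mom Y) (mom (fun x => X x ^+ 2)) (mom (fun x => Y x ^+ 2))
      (mom (fun x => X x * Y x)) c0 c1 c2 c3 c4 c5 P)%:E)%E.
Proof.
have [i1 e1] := intDZ c1 (i_cst c0) iX.
have [i2 e2] := intDZ c2 i1 iY.
have [i3 e3] := intDZ c3 i2 iX2.
have [i4 e4] := intDZ c4 i3 iY2.
have [i5 e5] := intDZ c5 i4 iXY.
rewrite /qp e5 e4 e3 e2 e1.
rewrite (int_mom iX) (int_mom iY) (int_mom iX2) (int_mom iY2) (int_mom iXY).
rewrite integral_cst //.
rewrite [X in (c0%:E * X)%E](_ : _ = 1%E); last exact: probability_setT.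
rewrite mule1 /Ec.
by rewrite -!EFinM -!EFinD.
Qed.

End OneP.

Section WithPP.
#[local] Set Default Proof Using "All".
Variable PP : set (probability T R).
Hypothesis PP0 : PP !=set0.
Hypothesis Hfin : (sublin_exp PP (fun w => (X w ^+ 2)%R) + sublin_exp PP (fun w => (Y w ^+ 2)%R) < +oo)%E.

Let mx := mom X.
Let my := mom Y.
Let mxx := mom (fun x => X x ^+ 2).
Let myy := mom (fun x => Y x ^+ 2).
Let mxy := mom (fun x => X x * Y x).
Let KX := fine (sublin_exp PP (fun w => (X w ^+ 2)%R)).
Let KY := fine (sublin_exp PP (fun w => (Y w ^+ 2)%R)).

Lemma sublin_ge W P : PP P -> (\int[P]_x (W x)%:E <= sublin_exp PP W)%E.
Proof. by move=> PPP; apply: ereal_sup_ubound; exists P. Qed.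

Lemma sublin_sq_ge0 (Z : T -> R) : (0 <= sublin_exp PP (fun w => (Z w ^+ 2)%R))%E.
Proof.
case: PP0 => P PPP; apply: (le_trans _ (sublin_ge _ _ PPP)).
by apply: integral_ge0 => x _; rewrite lee_fin; exact: sqr_ge0.
Qed.

Lemma finX : (sublin_exp PP (fun w => (X w ^+ 2)%R) < +oo)%E.
Proof.
apply: le_lt_trans Hfin; apply: leeDl; exact: sublin_sq_ge0.
Qed.

Lemma finY : (sublin_exp PP (fun w => (Y w ^+ 2)%R) < +oo)%E.
Proof.
apply: le_lt_trans Hfin; apply: leeDr; exact: sublin_sq_ge0.
Qed.

Lemma isq (Z : T -> R) P : measurable_fun setT Z -> PP P ->
  (sublin_exp PP (fun w => (Z w ^+ 2)%R) < +oo)%E ->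
  P.-integrable setT (EFin \o (fun x => Z x ^+ 2)).
Proof.
move=> mZ PPP fin; apply/integrableP; split.
  by apply/measurable_EFinP; exact: measurable_funX.
apply: le_lt_trans fin; apply: (le_trans _ (sublin_ge _ _ PPP)).
rewrite le_eqVlt; apply/orP; left; apply/eqP; apply: eq_integral => x _ /=.
by rewrite ger0_norm //; exact: sqr_ge0.
Qed.

Lemma iX2P {P} : PP P -> P.-integrable setT (EFin \o (fun x => X x ^+ 2)).
Proof. by move=> PPP; apply: isq => //; exact: finX. Qed.
Lemma iY2P {P} : PP P -> P.-integrable setT (EFin \o (fun x => Y x ^+ 2)).
Proof. by move=> PPP; apply: isq => //; exact: finY. Qed.

Lemma Hpos : forall P, PP P -> forall s t u : R,
  0 <= s ^+ 2 * mxx P + t ^+ 2 * myy P + 2 * s * t * mxy P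
       + 2 * s * u * mx P + 2 * t * u * my P + u ^+ 2.
Proof.
move=> P PPP s t u.
have := int_qp P (iX2P PPP) (iY2P PPP) (u ^+ 2) (2 * s * u) (2 * t * u) (s ^+ 2) (t ^+ 2) (2 * s * t).
have : (0 <= \int[P]_x (qp (u ^+ 2) (2 * s * u) (2 * t * u) (s ^+ 2) (t ^+ 2) (2 * s * t) (X x) (Y x))%:E)%E.
  apply: integral_ge0 => x _; rewrite lee_fin.
  have -> : qp (u ^+ 2) (2 * s * u) (2 * t * u) (s ^+ 2) (t ^+ 2) (2 * s * t) (X x) (Y x)
     = (s * X x + t * Y x + u) ^+ 2 by rewrite /qp; ring.
  exact: sqr_ge0.
move=> h e; rewrite e lee_fin /Ec in h; rewrite /mx /my /mxx /myy /mxy; lra.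
Qed.

Lemma HxxP : forall P, PP P -> mxx P <= KX.
Proof.
move=> P PPP; rewrite /mxx /mom /KX; apply: fine_le.
- exact: (integrable_fin_num measurableT (iX2P PPP)).
- by rewrite ge0_fin_numE ?finX //; exact: sublin_sq_ge0.
- exact: sublin_ge.
Qed.

Lemma HyyP : forall P, PP P -> myy P <= KY.
Proof.
move=> P PPP; rewrite /myy /mom /KY; apply: fine_le.
- exact: (integrable_fin_num measurableT (iY2P PPP)).
- by rewrite ge0_fin_numE ?finY //; exact: sublin_sq_ge0.
- exact: sublin_ge.
Qed.


Notation Hargs := (PP0 Hpos HxxP HyyP).

Lemma sublinE (W : T -> R) c0 c1 c2 c3 c4 c5 (f : probability T R -> R) :
  (forall w, W w = qp c0 c1 c2 c3 c4 c5 (X w) (Y w)) ->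
  (forall P, Ec mx my mxx myy mxy c0 c1 c2 c3 c4 c5 P = f P) ->
  sublin_exp PP W = (Sp PP f)%:E.
Proof.
move=> HW Hf; rewrite /sublin_exp.
have -> : [set (\int[P]_x (W x)%:E)%E | P in PP] = EFin @` [set f P | P in PP].
  apply/seteqP; split => [_ [P PPP <-]|_ [_ [P PPP <-] <-]].
    exists (f P); first by exists P.
    rewrite -Hf -(int_qp P (iX2P PPP) (iY2P PPP)).
    by apply: eq_integral => x _; rewrite HW.
  exists P => //.
  rewrite -Hf -(int_qp P (iX2P PPP) (iY2P PPP)).
  by apply: eq_integral => x _; rewrite HW.
rewrite ereal_sup_EFin //.
  have [b hb] := Ec_ub_set PP mx my mxx myy mxy KX KY PP0 Hpos HxxP HyyP c0 c1 c2 c3 c4 c5.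
  exists b => _ [P PPP <-]; rewrite -Hf; apply: hb; by exists P.
by case: PP0 => P PPP; exists (f P), P.
Qed.

Section Lin.
Variables (W : T -> R) (s t : R).
Hypothesis HW : forall w, W w = s * X w + t * Y w.

Lemma upper_mean_lin : upper_mean PP W = up PP mx my mxx myy mxy s t.
Proof.
rewrite /upper_mean (@sublinE W 0 s t 0 0 0 (mean mx my mxx myy mxy s t)) //.
by move=> w; rewrite HW /qp; ring.
Qed.

Lemma lower_mean_lin : lower_mean PP W = lo PP mx my mxx myy mxy s t.
Proof.
rewrite /lower_mean (@sublinE _ 0 (- s) (- t) 0 0 0 (fun i => - mean mx my mxx myy mxy s t i)) //.
  by move=> w; rewrite HW /qp; ring.
by move=> P; rewrite /mean /Ec; ring.
Qed.

Lemma Mset_lin : Mset PP W = Mi PP mx my mxx myy mxy s t.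
Proof. by rewrite /Mset upper_mean_lin lower_mean_lin. Qed.

Lemma upper_var_lin : upper_var PP W = UV PP mx my mxx myy mxy s t.
Proof.
rewrite /upper_var Mset_lin.
have -> : [set sublin_exp PP (fun w => ((W w - mu) ^+ 2)%R) | mu in Mi PP mx my mxx myy mxy s t]
   = EFin @` [set Sp PP (qf mx my mxx myy mxy s t mu) | mu in Mi PP mx my mxx myy mxy s t].
  have e : forall mu, sublin_exp PP (fun w => ((W w - mu) ^+ 2)%R)
       = (Sp PP (qf mx my mxx myy mxy s t mu))%:E.
    move=> mu; apply: (@sublinE _ (mu ^+ 2) (- (2 * mu * s)) (- (2 * mu * t)) (s ^+ 2) (t ^+ 2) (2 * s * t)) => //.
    by move=> w; rewrite HW /qp; ring.
  apply/seteqP; split => [_ [mu Mmu <-]|_ [_ [mu Mmu <-] <-]].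
    by exists (Sp PP (qf mx my mxx myy mxy s t mu)); [exists mu|rewrite e].
  by exists mu => //; rewrite e.
rewrite ereal_inf_EFin //.
  exact: (UV_lb PP mx my mxx myy mxy KX KY PP0 Hpos HxxP HyyP).
by case: (M_ne PP mx my mxx myy mxy KX KY PP0 Hpos HxxP HyyP s t) => m Mm; eexists; exists m.
Qed.

Lemma lower_var_lin : lower_var PP W = LV PP mx my mxx myy mxy s t.
Proof.
rewrite /lower_var Mset_lin.
have -> : [set (- sublin_exp PP (fun w => (- (W w - mu) ^+ 2)%R))%E | mu in Mi PP mx my mxx myy mxy s t]
   = EFin @` [set - Sp PP (fun i => - qf mx my mxx myy mxy s t mu i) | mu in Mi PP mx my mxx myy mxy s t].
  have e : forall mu, (- sublin_exp PP (fun w => (- (W w - mu) ^+ 2)%R))%E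
       = (- Sp PP (fun i => - qf mx my mxx myy mxy s t mu i))%:E.
    move=> mu; rewrite (@sublinE _ (- mu ^+ 2) (2 * mu * s) (2 * mu * t) (- s ^+ 2) (- t ^+ 2) (- (2 * s * t))
      (fun i => - qf mx my mxx myy mxy s t mu i)) //.
      by move=> w; rewrite HW /qp; ring.
    by move=> P; rewrite /qf /Ec; ring.
  apply/seteqP; split => [_ [mu Mmu <-]|_ [_ [mu Mmu <-] <-]].
    by exists (- Sp PP (fun i => - qf mx my mxx myy mxy s t mu i)); [exists mu|rewrite e].
  by exists mu => //; rewrite e.
rewrite ereal_inf_EFin //.
  exact: (LV_lb PP mx my mxx myy mxy KX KY PP0 Hpos HxxP HyyP).
by case: (M_ne PP mx my mxx myy mxy KX KY PP0 Hpos HxxP HyyP s t) => m Mm; eexists; exists m.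
Qed.
End Lin.


Lemma MsetX : Mset PP X = Mi PP mx my mxx myy mxy 1 0.
Proof. by apply: Mset_lin => w; ring. Qed.
Lemma MsetY : Mset PP Y = Mi PP mx my mxx myy mxy 0 1.
Proof. by apply: Mset_lin => w; ring. Qed.

Lemma sub_hf m1 m2 : sublin_exp PP (fun w => ((X w - m1) * (Y w - m2))%R)
   = (Sp PP (hf mx my mxx myy mxy m1 m2))%:E.
Proof.
apply: (@sublinE _ (m1 * m2) (- m2) (- m1) 0 0 1) => //.
by move=> w; rewrite /qp; ring.
Qed.

Lemma sub_Nhf m1 m2 : (- sublin_exp PP (fun w => (- ((X w - m1) * (Y w - m2)))%R))%E
   = (- Sp PP (fun i => - hf mx my mxx myy mxy m1 m2 i))%:E.
Proof.
rewrite (@sublinE _ (- (m1 * m2)) m2 m1 0 0 (-1) (fun i => - hf mx my mxx myy mxy m1 m2 i)) //.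
  by move=> w; rewrite /qp; ring.
by move=> P; rewrite /hf /Ec; ring.
Qed.

Lemma upper_cov_eq : upper_cov PP X Y = UC PP mx my mxx myy mxy.
Proof.
rewrite /upper_cov MsetX MsetY.
have inner : forall m2, Mi PP mx my mxx myy mxy 0 1 m2 ->
  ereal_inf [set sublin_exp PP (fun w => ((X w - m1) * (Y w - m2))%R) | m1 in Mi PP mx my mxx myy mxy 1 0]
  = (infI (Mi PP mx my mxx myy mxy 1 0) (fun m1 => Sp PP (hf mx my mxx myy mxy m1 m2)))%:E.
  move=> m2 Mm2.
  have -> : [set sublin_exp PP (fun w => ((X w - m1) * (Y w - m2))%R) | m1 in Mi PP mx my mxx myy mxy 1 0]
     = EFin @` [set Sp PP (hf mx my mxx myy mxy m1 m2) | m1 in Mi PP mx my mxx myy mxy 1 0].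
    apply/seteqP; split => [_ [m1 Mm1 <-]|_ [_ [m1 Mm1 <-] <-]].
      by exists (Sp PP (hf mx my mxx myy mxy m1 m2)); [exists m1|rewrite sub_hf].
    by exists m1 => //; rewrite sub_hf.
  rewrite ereal_inf_EFin //.
    exact: (UCin_lb PP mx my mxx myy mxy KX KY PP0 Hpos HxxP HyyP).
  by case: (M_ne PP mx my mxx myy mxy KX KY PP0 Hpos HxxP HyyP 1 0) => m Mm; eexists; exists m.
have -> : [set ereal_inf [set sublin_exp PP (fun w => ((X w - m1) * (Y w - m2))%R)
             | m1 in Mi PP mx my mxx myy mxy 1 0] | m2 in Mi PP mx my mxx myy mxy 0 1]
   = EFin @` [set infI (Mi PP mx my mxx myy mxy 1 0) (fun m1 => Sp PP (hf mx my mxx myy mxy m1 m2))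
             | m2 in Mi PP mx my mxx myy mxy 0 1].
  apply/seteqP; split => [_ [m2 Mm2 <-]|_ [_ [m2 Mm2 <-] <-]].
    by eexists; [exists m2|rewrite inner].
  by exists m2 => //; rewrite inner.
rewrite ereal_sup_EFin //.
  exact: (UCout_ub PP mx my mxx myy mxy KX KY PP0 Hpos HxxP HyyP).
by case: (M_ne PP mx my mxx myy mxy KX KY PP0 Hpos HxxP HyyP 0 1) => m Mm; eexists; exists m.
Qed.

Lemma lower_cov_eq : lower_cov PP X Y = LC PP mx my mxx myy mxy.
Proof.
rewrite /lower_cov MsetX MsetY.
have inner : forall m2, Mi PP mx my mxx myy mxy 0 1 m2 ->
  ereal_sup [set (- sublin_exp PP (fun w => (- ((X w - m1) * (Y w - m2)))%R))%E
     | m1 in Mi PP mx my mxx myy mxy 1 0]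
  = (supI (Mi PP mx my mxx myy mxy 1 0)
       (fun m1 => - Sp PP (fun i => - hf mx my mxx myy mxy m1 m2 i)))%:E.
  move=> m2 Mm2.
  have -> : [set (- sublin_exp PP (fun w => (- ((X w - m1) * (Y w - m2)))%R))%E
     | m1 in Mi PP mx my mxx myy mxy 1 0]
     = EFin @` [set - Sp PP (fun i => - hf mx my mxx myy mxy m1 m2 i) | m1 in Mi PP mx my mxx myy mxy 1 0].
    apply/seteqP; split => [_ [m1 Mm1 <-]|_ [_ [m1 Mm1 <-] <-]].
      by eexists; [exists m1|rewrite sub_Nhf].
    by exists m1 => //; rewrite sub_Nhf.
  rewrite ereal_sup_EFin //.
    exact: (LCin_ub PP mx my mxx myy mxy KX KY PP0 Hpos HxxP HyyP).
  by case: (M_ne PP mx my mxx myy mxy KX KY PP0 Hpos HxxP HyyP 1 0) => m Mm; eexists; exists m.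
have -> : [set ereal_sup [set (- sublin_exp PP (fun w => (- ((X w - m1) * (Y w - m2)))%R))%E
     | m1 in Mi PP mx my mxx myy mxy 1 0] | m2 in Mi PP mx my mxx myy mxy 0 1]
   = EFin @` [set supI (Mi PP mx my mxx myy mxy 1 0)
       (fun m1 => - Sp PP (fun i => - hf mx my mxx myy mxy m1 m2 i)) | m2 in Mi PP mx my mxx myy mxy 0 1].
  apply/seteqP; split => [_ [m2 Mm2 <-]|_ [_ [m2 Mm2 <-] <-]].
    by eexists; [exists m2|rewrite inner].
  by exists m2 => //; rewrite inner.
rewrite ereal_inf_EFin //.
  exact: (LCout_lb PP mx my mxx myy mxy KX KY PP0 Hpos HxxP HyyP).
by case: (M_ne PP mx my mxx myy mxy KX KY PP0 Hpos HxxP HyyP 0 1) => m Mm; eexists; exists m.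
Qed.

Lemma concrete_main :
  [/\ upper_var PP (fun w => X w + Y w)
        <= upper_var PP X + upper_var PP Y + 2 * upper_cov PP X Y,
      lower_var PP (fun w => X w + Y w)
        >= lower_var PP X + lower_var PP Y + 2 * lower_cov PP X Y,
      [/\ lower_var PP (fun w => (X w + Y w) / 2) - upper_var PP (fun w => (X w - Y w) / 2)
            <= lower_cov PP X Y,
          lower_cov PP X Y <= upper_cov PP X Y
        & upper_cov PP X Y
            <= upper_var PP (fun w => (X w + Y w) / 2) - lower_var PP (fun w => (X w - Y w) / 2)]
    & `|upper_cov PP X Y| <= Num.sqrt (upper_var PP X * upper_var PP Y)].
Proof.
rewrite upper_cov_eq lower_cov_eq.
rewrite (@upper_var_lin (fun w => X w + Y w) 1 1); last by move=> w; ring.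
rewrite (@lower_var_lin (fun w => X w + Y w) 1 1); last by move=> w; ring.
rewrite (@upper_var_lin X 1 0); last by move=> w; ring.
rewrite (@upper_var_lin Y 0 1); last by move=> w; ring.
rewrite (@lower_var_lin X 1 0); last by move=> w; ring.
rewrite (@lower_var_lin Y 0 1); last by move=> w; ring.
rewrite (@lower_var_lin (fun w => (X w + Y w) / 2) (2^-1) (2^-1)); last by move=> w; field.
rewrite (@upper_var_lin (fun w => (X w + Y w) / 2) (2^-1) (2^-1)); last by move=> w; field.
rewrite (@lower_var_lin (fun w => (X w - Y w) / 2) (2^-1) (- 2^-1)); last by move=> w; field.
rewrite (@upper_var_lin (fun w => (X w - Y w) / 2) (2^-1) (- 2^-1)); last by move=> w; field.
exact: (abstract_main PP mx my mxx myy mxy KX KY PP0 Hpos HxxP HyyP).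
Qed.

End WithPP.
End Concrete.

Theorem proposition3p8 (d : measure_display) (T : measurableType d) (R : realType)
  (PP : set (probability T R)) (X Y : T -> R) :
  PP !=set0 ->
  measurable_fun setT X -> measurable_fun setT Y ->
  (sublin_exp PP (fun w => (X w ^+ 2)%R) + sublin_exp PP (fun w => (Y w ^+ 2)%R) < +oo)%E ->
  [/\ upper_var PP (fun w => X w + Y w)
        <= upper_var PP X + upper_var PP Y + 2 * upper_cov PP X Y,
      lower_var PP (fun w => X w + Y w)
        >= lower_var PP X + lower_var PP Y + 2 * lower_cov PP X Y,
      [/\ lower_var PP (fun w => (X w + Y w) / 2) - upper_var PP (fun w => (X w - Y w) / 2)
            <= lower_cov PP X Y,
          lower_cov PP X Y <= upper_cov PP X Y
        & upper_cov PP X Y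
            <= upper_var PP (fun w => (X w + Y w) / 2) - lower_var PP (fun w => (X w - Y w) / 2)]
    & `|upper_cov PP X Y| <= Num.sqrt (upper_var PP X * upper_var PP Y)].
Proof.
move=> PP0 mX mY Hfin.
have H := concrete_main X Y mX mY PP PP0 Hfin.
exact H.
Qed.
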